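(* Let $N$ be a positive even integer and let $\sigma\colon\{0,1\}^*\to\{0,1,\#\}^*$ be the substitution defined by $\sigma(0)=\#0^{N-1}$ and $\sigma(1)=\#1^{N-1}$. Let $\mathbf{w}$ be an infinite binary word. If an abelian power $u_0\cdots u_{e-1}$ with $e\ge N$ occurs in $\sigma(\mathbf{w})$, then $N$ divides $|u_0|$.
   Context: Two finite words $u,v$ are abelian equivalent, written $u\sim v$, if they are permutations of each other. An abelian power of exponent $e$ (a positive integer) and period $m$ is a word of the form $u_0u_1\cdots u_{e-1}$ where $u_0,\dots,u_{e-1}$ are nonempty, pairwise abelian equivalent, and $m=|u_0|$. The image $\sigma(\mathbf{w})$ of an infinite word is obtained by applying $\sigma$ letter by letter. *)

(* Defs.v *)
From mathcomp Require Import all_boot.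
Set Implicit Arguments. Unset Strict Implicit. Unset Printing Implicit Defensive.

(* Output alphabet {0,1,#}: [Some b] is the letter b, [None] is #. *)
Definition letter := option bool.
Definition hash : letter := None.

Definition infword (T : Type) := nat -> T.

Definition sigma (N : nat) (a : bool) : seq letter := hash :: nseq N.-1 (Some a).

(* Image sigma(w) of an infinite binary word, applying sigma letter by letter:
   since every sigma(a) has length N (N > 0), position i of the concatenation
   sigma(w 0) sigma(w 1) ... is letter (i mod N) of sigma(w (i div N)). *)
Definition sigma_img (N : nat) (w : infword bool) : infword letter :=
  fun i => nth hash (sigma N (w (i %/ N))) (i %% N).

Definition abelian_eq (T : eqType) (u v : seq T) : bool := perm_eq u v.

(* The list of blocks us = [u_0; ...; u_{e-1}] forms an abelian power
   u_0 ... u_{e-1} of exponent e = size us (e >= 1): all blocks nonempty and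
   pairwise abelian equivalent. Its period is size u_0. *)
Definition abelian_power_blocks (T : eqType) (us : seq (seq T)) : Prop :=
  0 < size us /\ (forall u, u \in us -> 0 < size u) /\
  (forall u v, u \in us -> v \in us -> abelian_eq u v).

Definition occurs_in (T : Type) (s : seq T) (x : infword T) : Prop :=
  exists p, forall i, i < size s -> nth (x (p + i)) s i = x (p + i).

(* Main.v *)
Require Import Defs.
From mathcomp Require Import all_boot.
From mathcomp Require Import zify.

Lemma cnt1 N a : 0 < N -> count (fun i => N %| i) (iota a N) = 1.
Proof.
move=> HN; elim: a => [|a IH].
  case: N HN => // n _ /=; rewrite ?dvdn0 ?add1n.
  rewrite (@eq_in_count _ _ pred0) ?count_pred0 // => i.
  rewrite mem_iota add1n => /andP[h1 h2] /=.
  by rewrite /dvdn modn_small //; case: i h1 h2.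
have e1 : iota a N.+1 = a :: iota a.+1 N by [].
have e2 : iota a N.+1 = iota a N ++ [:: a + N] by rewrite -addn1 iotaD.
have := congr1 (count (fun i => N %| i)) e1.
rewrite e2 count_cat /= IH (dvdn_addl _ (dvdnn N)) addn0.
case: (N %| a) => /=; lia.
Qed.

Lemma cntk N a k : 0 < N -> count (fun i => N %| i) (iota a (N * k)) = k.
Proof.
move=> HN; elim: k a => [|k IH] a; first by rewrite muln0.
by rewrite mulnS iotaD count_cat cnt1 // IH.
Qed.

Lemma sumn_const (T : eqType) (s : seq T) f c :
  (forall x, x \in s -> f x = c) -> sumn (map f s) = size s * c.
Proof.
elim: s => [|x s IH] H //=.
rewrite H ?mem_head //.
rewrite IH ?mulSn // => y Hy; apply: H; by rewrite in_cons Hy orbT.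
Qed.

Lemma sig_hash N w k : 0 < N -> (sigma_img N w k == hash) = (N %| k).
Proof.
move=> HN; rewrite /sigma_img /sigma /dvdn.
have := ltn_pmod k HN.
case: (k %% N) => [|j] //= h.
rewrite nth_nseq.
have hj : j < N.-1 by lia.
by rewrite hj.
Qed.

Theorem lemma2 (N : nat) (HN : 0 < N) (Heven : ~~ odd N) (w : infword bool)
    (us : seq (seq letter)) :
  abelian_power_blocks us -> N <= size us ->
  occurs_in (flatten us) (sigma_img N w) ->
  N %| size (head [::] us).
Proof.
move=> [Hsz [Hne Hperm]] HNe [p Hp].
set m := size (head [::] us).
set c0 := count (pred1 hash) (head [::] us).
have Hh : head [::] us \in us by case: us Hsz {Hne Hperm HNe Hp m c0} => // u s _; rewrite mem_head.
have Hu : forall u, u \in us -> size u = m /\ count (pred1 hash) u = c0.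
  move=> u Hu; have Hpe := Hperm _ _ Hu Hh; rewrite /abelian_eq in Hpe.
  split; first exact: perm_size.
  by move/permP: Hpe => ->.
set t := take N us.
have Ht : forall u, u \in t -> u \in us.
  move=> u Hin; exact: (mem_take Hin).
have Hst : size t = N by rewrite size_takel.
have Hsize : size (flatten t) = N * m.
  rewrite size_flatten /shape (@sumn_const _ _ _ m) ?Hst // => x Hx.
  by case: (Hu _ (Ht _ Hx)).
have Hcnt : count (pred1 hash) (flatten t) = N * c0.
  rewrite count_flatten (@sumn_const _ _ _ c0) ?Hst // => x Hx.
  by case: (Hu _ (Ht _ Hx)).
have Hsplit : flatten us = flatten t ++ flatten (drop N us)
  by rewrite -flatten_cat cat_take_drop.
have Hft : flatten t = mkseq (fun i => sigma_img N w (p + i)) (N * m).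
  apply: (@eq_from_nth _ hash); first by rewrite size_mkseq.
  move=> i Hi; rewrite nth_mkseq -?Hsize //.
  have Hi' : i < size (flatten us) by rewrite Hsplit size_cat; lia.
  rewrite -(Hp i Hi') Hsplit nth_cat Hi.
  exact: set_nth_default.
have Hc2 : count (pred1 hash) (flatten t) = m.
  rewrite Hft /mkseq count_map.
  rewrite (@eq_count _ _ (fun i => N %| p + i)); last first.
    by move=> i /=; rewrite sig_hash.
  have -> : count (fun i => N %| p + i) (iota 0 (N * m))
         = count (fun i => N %| i) (map (addn p) (iota 0 (N * m)))
    by rewrite count_map.
  by rewrite -iotaDl addn0 cntk.
apply/dvdnP; exists c0; by rewrite mulnC -Hcnt Hc2.
Qed.
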